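(* Let $n \geq 5$ and fix $\tau \in [0, \cos(2\pi/5))$ with $\tau \notin \{\cos(2\pi(i-1)/n) : i = 1,\dots,n\}$. Let $X \in (\mathbb{S}^1)^n$ be the regular $n$-gon, $x_i = (\cos\theta_i, \sin\theta_i)$ with $\theta_i = 2\pi(i-1)/n$. There exists $\varepsilon_{n,\tau} > 0$ such that for all $\varepsilon \in (0, \varepsilon_{n,\tau}]$, $X$ is a critical point of $f(X) = \frac12 \sum_{i,j=1}^n \varphi_{\varepsilon,\tau}(x_i^\top x_j)$ (all weights equal to 1), and the Riemannian Hessian of $f$ at $X$ has one zero eigenvalue and its other $n-1$ eigenvalues are negative.
   Context: $(\mathbb{S}^1)^n$ is the set of $X\in\mathbb{R}^{2\times n}$ with unit-norm columns, a Riemannian submanifold with the Frobenius metric. $\varphi_{\varepsilon,\tau}(t) = \varepsilon\log(1 + e^{(t-\tau)/\varepsilon})$ for $\varepsilon>0$. *)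

(* Defs.v *)
From HB Require Import structures.
From mathcomp Require Import all_boot all_order all_algebra.
From mathcomp Require Import all_classical all_reals all_analysis.
Set Implicit Arguments. Unset Strict Implicit. Unset Printing Implicit Defensive.
Import Order.TTheory GRing.Theory Num.Theory.
Import numFieldNormedType.Exports.
Local Open Scope ring_scope.

Section Defs.
Variable R : realType.
Variable n : nat.
Notation M := 'M[R]_(2, n).

Definition frob (A B : M) : R := \sum_(r < 2) \sum_(i < n) A r i * B r i.

Definition coldot (A B : M) (i j : 'I_n) : R := \sum_(r < 2) A r i * B r j.

Definition on_torus (X : M) : Prop := forall i, coldot X X i i = 1.

Definition tangent (X V : M) : Prop := forall i, coldot X V i i = 0.

(* orthogonal projection onto the tangent space (columnwise),
   defined for all X (smooth extension off the manifold) *)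
Definition proj (X V : M) : M :=
  \matrix_(r < 2, i < n) (V r i - coldot X V i i * X r i).

Definition egrad (f : M -> R) (X : M) : M :=
  \matrix_(r < 2, i < n) ('D_(delta_mx r i) f X).

Definition rgrad (f : M -> R) (X : M) : M := proj X (egrad f X).

(* Riemannian Hessian for a Riemannian submanifold:
   Hess f(X)[V] = Proj_X (D grad f (X)[V]), grad f extended smoothly by
   Y |-> proj Y (egrad f Y). *)
Definition rhess (f : M -> R) (X V : M) : M :=
  proj X ('D_V (fun Y => rgrad f Y) X).

End Defs.

Definition phi (R : realType) (eps tau t : R) : R :=
  eps * ln (1 + expR ((t - tau) / eps)).

Definition fobj (R : realType) (n : nat) (eps tau : R) (X : 'M[R]_(2, n)) : R :=
  2^-1 * \sum_(i < n) \sum_(j < n) phi eps tau (coldot X X i j).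

(* regular n-gon: x_i = (cos theta_i, sin theta_i), theta_i = 2 pi i / n
   (0-indexed, i.e. 2 pi (i-1)/n for i = 1..n) *)
Definition ngon (R : realType) (n : nat) : 'M[R]_(2, n) :=
  \matrix_(r < 2, i < n)
    (if r == 0 :> nat then cos (2 * pi * i%:R / n%:R)
     else sin (2 * pi * i%:R / n%:R)).

(* Main.v *)
Require Import Defs.
From HB Require Import structures.
From mathcomp Require Import all_boot all_order all_algebra.
From mathcomp Require Import all_classical all_reals all_analysis.
From mathcomp Require Import ring lra.
Import Order.TTheory GRing.Theory Num.Theory.
Import numFieldNormedType.Exports.
Local Open Scope ring_scope.


Section Tools.
Variable R : realType.
Variable V : normedModType R.

Lemma dirE (F : V -> R) x v :
  'D_v F x = 'D_1 (fun h : R => F (h *: v + x)) 0.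
Proof.
rewrite /derive; set g1 := fun h => h^-1 *: _; set g2 := fun h => h^-1 *: _.
suff -> : g1 = g2 by [].
by rewrite funeqE /g1 /g2 => h /=; rewrite addr0 scale0r add0r [_%:A]mulr1.
Qed.

Lemma isd_comp (F : V -> R) (g : R -> R) x v d g' :
  is_derive x v F d -> is_derive (F x) 1 g g' ->
  is_derive x v (fun y => g (F y)) (g' * d).
Proof.
move=> [dF vF] [dg vg].
have hG : is_derive (0:R) 1 (fun h : R => F (h *: v + x)) d.
  split; first exact: (derivable1P F x v).1 dF.
  by rewrite -dirE.
have hg : is_derive ((fun h : R => F (h *: v + x)) 0) 1 g g'.
  by rewrite /= scale0r add0r; split.
have := @is_derive1_comp R g (fun h : R => F (h *: v + x)) 0 g' d hg hG.
move=> [d1 v1]; split.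
  exact: (derivable1P (fun y => g (F y)) x v).2 d1.
by rewrite dirE.
Qed.

Lemma isd_add (F G : V -> R) x v a b :
  is_derive x v F a -> is_derive x v G b ->
  is_derive x v (fun y => F y + G y) (a + b).
Proof. by move=> h1 h2; have := is_deriveD h1 h2. Qed.

Lemma isd_sub (F G : V -> R) x v a b :
  is_derive x v F a -> is_derive x v G b ->
  is_derive x v (fun y => F y - G y) (a - b).
Proof. by move=> h1 h2; have := is_deriveB h1 h2. Qed.

Lemma isd_mul (F G : V -> R) x v a b :
  is_derive x v F a -> is_derive x v G b ->
  is_derive x v (fun y => F y * G y) (F x * b + G x * a).
Proof. by move=> h1 h2; have := is_deriveM h1 h2. Qed.

Lemma isd_cst (c : R) x v : is_derive x v (fun _ : V => c) 0.
Proof. exact: is_derive_cst. Qed.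

Lemma isd_sum m (F : 'I_m -> V -> R) x v (d : 'I_m -> R) :
  (forall i, is_derive x v (F i) (d i)) ->
  is_derive x v (fun y => \sum_(i < m) F i y) (\sum_(i < m) d i).
Proof.
move=> h; have := is_derive_sum h.
by rewrite (_ : \sum_(i < m) F i = fun y => \sum_(i < m) F i y) // fct_sumE.
Qed.

End Tools.
Arguments isd_comp {R V F g x v d g'}.
Arguments isd_add {R V F G x v a b}.
Arguments isd_sub {R V F G x v a b}.
Arguments isd_mul {R V F G x v a b}.
Arguments isd_cst {R V}.
Arguments isd_sum {R V m F x v d}.

Lemma isd_dir (R : realType) (V : normedModType R) (F : V -> R) x v d :
  is_derive (0:R) 1 (fun h : R => F (h *: v + x)) d -> is_derive x v F d.
Proof.
move=> [d1 v1]; split; first exact: (derivable1P F x v).2 d1.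
by rewrite dirE.
Qed.

Lemma isd_coord (R : realType) m k (Y V : 'M[R]_(m, k)) i j :
  is_derive Y V (fun Z : 'M[R]_(m, k) => Z i j) (V i j).
Proof.
apply: isd_dir.
rewrite (_ : (fun h : R => (h *: V + Y) i j) = (fun h => h * V i j + Y i j)); last first.
  by apply/funext => h; rewrite !mxE.
have := isd_add (isd_mul (@is_derive_id R R (0:R) (1:R)) (@isd_cst R R (V i j) 0 1)) (@isd_cst R R (Y i j) 0 1).
by rewrite mul0r add0r mulr1 addr0.
Qed.


Section Phi.
Variable R : realType.
Variables eps tau : R.
Hypothesis eps0 : 0 < eps.

Definition uu (t : R) := (t - tau) / eps.
Definition pp (t : R) := expR (uu t) / (1 + expR (uu t)).
Definition qq (t : R) := expR (uu t) / (1 + expR (uu t)) ^+ 2 / eps.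

Lemma epsn0 : eps != 0. Proof. by rewrite gt_eqF. Qed.
Lemma onee_gt0 (t : R) : 0 < 1 + expR t. Proof. by rewrite addr_gt0 // expR_gt0. Qed.
Lemma onee_n0 (t : R) : 1 + expR t != 0. Proof. by rewrite gt_eqF // onee_gt0. Qed.

Lemma isd_uu (t : R) : is_derive t 1 uu eps^-1.
Proof.
have := isd_mul (isd_sub (@is_derive_id R R t 1) (@isd_cst R R tau t 1)) (@isd_cst R R eps^-1 t 1).
rewrite mulr0 add0r subr0 mulr1 => h.
exact: h.
Qed.

Lemma isd_eu (t : R) : is_derive t 1 (fun y => expR (uu y)) (expR (uu t) * eps^-1).
Proof. exact: isd_comp (isd_uu t) (is_derive_expR _). Qed.

Lemma isd_phi (t : R) : is_derive t 1 (phi eps tau) (pp t).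
Proof.
have h1 := isd_add (@isd_cst R R 1 t 1) (isd_eu t).
have h2 := isd_comp h1 (is_derive1_ln (onee_gt0 (uu t))).
have h3 := isd_mul (@isd_cst R R eps t 1) h2.
rewrite (_ : phi eps tau = fun y => eps * ln (1 + expR (uu y))); last first.
  by apply/funext => y; rewrite /phi /uu.
eapply is_derive_eq; first exact: h3.
rewrite /pp mulr0 addr0 add0r.
have := epsn0; have := onee_n0 (uu t) => h e.
change (eps * ((1 + expR (uu t))^-1 * (expR (uu t) / eps)) = expR (uu t) / (1 + expR (uu t)) :> R).
by field; rewrite h e.
Qed.

Lemma isd_pp (t : R) : is_derive t 1 pp (qq t).
Proof.
have h1 := isd_add (@isd_cst R R 1 t 1) (isd_eu t).
have h2 := @is_deriveV R (fun y => 1 + expR (uu y)) t _ 1 (onee_n0 (uu t)) h1.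
have h3 := isd_mul (isd_eu t) h2.
rewrite (_ : pp = fun y => expR (uu y) * (1 + expR (uu y))^-1) //.
eapply is_derive_eq; first exact: h3.
rewrite /qq add0r.
have := epsn0; have := onee_n0 (uu t) => h e.
rewrite /GRing.scale /=.
match goal with |- ?g => idtac g end.
by field; rewrite ?h ?e.
Qed.

End Phi.


Section Trig.
Variable R : realType.
Variable n : nat.
Hypothesis n0 : (0 < n)%N.

Definition ang (k : nat) : R := 2 * pi * k%:R / n%:R.

Lemma Nn0 : (n%:R : R) != 0. Proof. by rewrite pnatr_eq0 -lt0n. Qed.

Lemma angD a b : ang (a + b) = ang a + ang b.
Proof. by rewrite /ang natrD; have := Nn0 => h; field. Qed.

Lemma ang_n : ang n = pi *+ 2.
Proof. by rewrite /ang; have := Nn0 => h; rewrite -mulr_natl; field. Qed.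

Lemma cos_per m x : cos (x + m%:R * (pi *+ 2)) = cos x :> R.
Proof.
elim: m => [|m IH]; first by rewrite mul0r addr0.
by rewrite -addn1 natrD mulrDl mul1r addrA cosD2pi.
Qed.

Lemma sin_per m x : sin (x + m%:R * (pi *+ 2)) = sin x :> R.
Proof.
elim: m => [|m IH]; first by rewrite mul0r addr0.
by rewrite -addn1 natrD mulrDl mul1r addrA sinD2pi.
Qed.

Lemma sum_shift1 (F : nat -> R) : F n = F 0%N ->
  \sum_(j < n) F j.+1 = \sum_(j < n) F j.
Proof.
move=> e.
have h1 := big_ord_recr n (fun j : 'I_n.+1 => F j).
have h2 := big_ord_recl n (fun j : 'I_n.+1 => F j).
simpl in h1, h2.
have : \sum_(i < n) F (widen_ord (leqnSn n) i) + F n = F 0%N + \sum_(i < n) F (bump 0 i).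
  by rewrite -h1 -h2.
rewrite e => h.
have -> : \sum_(j < n) F j.+1 = \sum_(i < n) F (bump 0 i) by [].
have -> : \sum_(j < n) F j = \sum_(i < n) F (widen_ord (leqnSn n) i) by [].
by move: h; rewrite addrC => /addrI.
Qed.

Lemma sum_shift (g : R -> R) : periodic g (pi *+ 2) -> forall k,
  \sum_(j < n) g (ang (j + k)) = \sum_(j < n) g (ang j).
Proof.
move=> pg; elim=> [|k IH]; first by under eq_bigr do rewrite addn0.
rewrite -IH.
have -> : \sum_(j < n) g (ang (j + k.+1)) = \sum_(j < n) (fun m => g (ang (m + k))) j.+1.
  by apply: eq_bigr => j _; rewrite addSnnS.
apply: (sum_shift1 (fun m => g (ang (m + k)))).
by rewrite /= add0n angD ang_n [pi *+ 2 + _]addrC pg.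
Qed.

Lemma perB (g : R -> R) : periodic g (pi *+ 2) -> forall y, g (y - pi *+ 2) = g y.
Proof. by move=> pg y; rewrite -[in RHS](subrK (pi *+ 2) y) pg. Qed.

Lemma angB a b : (b <= a)%N -> ang (a - b) = ang a - ang b.
Proof. by move=> h; rewrite /ang natrB //; have := Nn0 => h'; field. Qed.

Lemma sum_shiftB (g : R -> R) : periodic g (pi *+ 2) -> forall k, (k <= n)%N ->
  \sum_(j < n) g (ang j - ang k) = \sum_(j < n) g (ang j).
Proof.
move=> pg k kn; rewrite -(@sum_shift g pg (n - k)); apply: eq_bigr => j _.
rewrite angD angB // ang_n.
have -> : ang j + (pi *+ 2 - ang k) = (ang j - ang k) + pi *+ 2 by ring.
by rewrite pg.
Qed.

Lemma sum_refl (g : R -> R) : periodic g (pi *+ 2) ->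
  \sum_(j < n) g (- ang j) = \sum_(j < n) g (ang j).
Proof.
move=> pg; rewrite (reindex_inj rev_ord_inj) /=.
rewrite -(@sum_shift g pg 1); apply: eq_bigr => j _.
rewrite angB; last by rewrite ltn_ord.
rewrite ang_n opprB addn1.
by rewrite perB.
Qed.

Lemma per_cos (m : nat) (c : R) : periodic (fun x => cos (m%:R * x + c)) (pi *+ 2).
Proof.
move=> x /=; rewrite mulrDr -addrA [_ * _ + c]addrC addrA.
by rewrite -[in RHS](cos_per m) -addrA [c + _]addrC addrA.
Qed.

Lemma per_sin (m : nat) (c : R) : periodic (fun x => sin (m%:R * x + c)) (pi *+ 2).
Proof.
move=> x /=; rewrite mulrDr -addrA [_ * _ + c]addrC addrA.
by rewrite -[in RHS](sin_per m) -addrA [c + _]addrC addrA.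
Qed.

Lemma sum_sin0 (a : nat) : \sum_(j < n) sin (a%:R * ang j) = 0.
Proof.
have := @sum_refl (fun x => sin (a%:R * x + 0)) (per_sin a 0).
under eq_bigr do rewrite addr0 mulrN sinN.
under [in X in _ = X -> _]eq_bigr do rewrite addr0.
rewrite sumrN => h; lra.
Qed.

Lemma cos_lt1 (x : R) : 0 < x < pi *+ 2 -> cos x < 1.
Proof.
move=> /andP[x0 x2].
have -> : x = (x / 2) *+ 2 by rewrite -mulr_natr; field.
rewrite cos_mulr2n cos2sin2.
have : 0 < sin (x / 2).
  apply: sin_gt0_pi; apply/andP; split; first by rewrite divr_gt0.
  by rewrite ltr_pdivrMr // mulr_natr.
move=> h; have h2 : 0 < sin (x / 2) ^+ 2 by rewrite exprn_gt0.
lra.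
Qed.

Lemma sum_cos0 (a : nat) : (0 < a)%N -> (a < n)%N ->
  \sum_(j < n) cos (a%:R * ang j) = 0.
Proof.
move=> a0 an.
have := @sum_shift (fun x => cos (a%:R * x + 0)) (per_cos a 0) 1.
under eq_bigr do rewrite addr0 angD mulrDr cosD.
under [in X in _ = X -> _]eq_bigr do rewrite addr0.
set C := \sum_(j < n) cos (a%:R * ang j).
rewrite big_split /= sumrN -!mulr_suml sum_sin0 mul0r oppr0 addr0 -/C => e.
have lt1 : cos (a%:R * ang 1) < 1.
  apply: cos_lt1.
  have -> : a%:R * ang 1 = (pi *+ 2) * (a%:R / n%:R).
    by rewrite /ang; have := Nn0 => h; rewrite -mulr_natl; field.
  have hn : (0 : R) < n%:R by rewrite ltr0n.
  have q0 : 0 < (a%:R : R) / n%:R by rewrite divr_gt0 // ltr0n.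
  have q1 : (a%:R : R) / n%:R < 1 by rewrite ltr_pdivrMr // mul1r ltr_nat.
  have p0 : 0 < pi *+ 2 :> R by rewrite mulrn_wgt0 // pi_gt0.
  set P := pi *+ 2 in p0 *; set q := _ / _ in q0 q1 *.
  apply/andP; split; nra.
have : C * (1 - cos (a%:R * ang 1)) = 0.
  by rewrite mulrBr mulr1; rewrite -[X in X - _]e subrr.
move/eqP; rewrite mulf_eq0 => /orP[/eqP //|].
by rewrite subr_eq0 => /eqP h; rewrite -h ltxx in lt1.
Qed.

End Trig.


Arguments isd_coord {R m k}.
Arguments pp {R}.
Arguments qq {R}.
Arguments uu {R}.
Arguments isd_phi {R eps} tau.
Arguments isd_pp {R eps} tau.

Section Deriv.
Variable R : realType.
Variable n : nat.
Variables eps tau : R.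
Hypothesis eps0 : 0 < eps.
Notation M := 'M[R]_(2, n).

Lemma isd_coldot (Y V : M) i j :
  is_derive Y V (fun Z : M => coldot Z Z i j) (coldot V Y i j + coldot Y V i j).
Proof.
have h := @isd_sum R _ 2 (fun r (Z : M) => Z r i * Z r j) Y V _
  (fun r => isd_mul (isd_coord Y V r i) (isd_coord Y V r j)).
eapply is_derive_eq; first exact: h.
rewrite /coldot -big_split /=; apply: eq_bigr => r _; ring.
Qed.

Definition cc (Y : M) k j := coldot Y Y k j.
Definition dc (Y V : M) k j := coldot V Y k j + coldot Y V k j.

Lemma isd_fobj (Y V : M) : is_derive Y V (fobj eps tau)
  (2^-1 * \sum_(i < n) \sum_(j < n) pp eps tau (cc Y i j) * dc Y V i j).
Proof.
have h := isd_mul (@isd_cst R M 2^-1 Y V)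
  (@isd_sum R _ n (fun i (Z : M) => \sum_(j < n) phi eps tau (coldot Z Z i j)) Y V _
    (fun i => @isd_sum R _ n (fun j (Z : M) => phi eps tau (coldot Z Z i j)) Y V _
      (fun j => isd_comp (isd_coldot Y V i j) (isd_phi tau eps0 _)))).
eapply is_derive_eq; first exact: h.
by rewrite mulr0 addr0.
Qed.

Definition GGe (Y : M) r k := \sum_(j < n) pp eps tau (cc Y k j) * Y r j.
Definition GG (Y : M) : M := \matrix_(r, k) GGe Y r k.

Lemma coldot_sym (Y Z : M) i j : coldot Y Z i j = coldot Z Y j i.
Proof. by rewrite /coldot; apply: eq_bigr => r _; rewrite mulrC. Qed.

Lemma coldot_deltaL (Y : M) r k i j :
  coldot (delta_mx r k) Y i j = (i == k)%:R * Y r j.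
Proof.
rewrite /coldot (bigD1 r) //= big1 ?addr0; first by rewrite mxE eqxx.
by move=> s /negPf sr; rewrite mxE sr mul0r.
Qed.

Lemma sum_delta (F : 'I_n -> R) k : \sum_(i < n) (i == k)%:R * F i = F k.
Proof.
rewrite (bigD1 k) //= eqxx mul1r big1 ?addr0 // => i /negPf ->; by rewrite mul0r.
Qed.

Lemma egradE (Y : M) : egrad (fobj eps tau) Y = GG Y.
Proof.
apply/matrixP => r k; rewrite !mxE.
have [_ ->] := isd_fobj Y (delta_mx r k).
rewrite /dc.
have e1 : \sum_(i < n) \sum_(j < n) pp eps tau (cc Y i j) *
     (coldot (delta_mx r k) Y i j + coldot Y (delta_mx r k) i j)
   = \sum_(i < n) \sum_(j < n) (i == k)%:R * (pp eps tau (cc Y i j) * Y r j)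
   + \sum_(i < n) \sum_(j < n) (j == k)%:R * (pp eps tau (cc Y i j) * Y r i).
  rewrite -big_split; apply: eq_bigr => i _; rewrite -big_split; apply: eq_bigr => j _.
  rewrite coldot_deltaL coldot_sym coldot_deltaL; simpl; ring.
rewrite e1; under eq_bigr do rewrite -mulr_sumr.
rewrite sum_delta; under [X in _ * (_ + X)]eq_bigr do rewrite sum_delta.
rewrite /GGe; under [X in _ * (_ + X)]eq_bigr do rewrite /cc coldot_sym.
have -> : \sum_(i < n) pp eps tau (coldot Y Y k i) * Y r i
   = \sum_(j < n) pp eps tau (cc Y k j) * Y r j by [].
by field.
Qed.

End Deriv.

Arguments isd_coord {R m k}.
Arguments pp {R}.
Arguments qq {R}.
Arguments uu {R}.
Arguments isd_phi {R eps} tau.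
Arguments isd_pp {R eps} tau.
Arguments isd_coldot {R n}.

Section Deriv2.
Variable R : realType.
Variable n : nat.
Variables eps tau : R.
Hypothesis eps0 : 0 < eps.
Notation M := 'M[R]_(2, n).
Notation GGe := (@GGe R n eps tau).
Notation cc := (@cc R n).
Notation dc := (@dc R n).

Definition CD (Y : M) k := \sum_(s < 2) Y s k * GGe Y s k.
Definition PE (Y : M) r k := GGe Y r k - CD Y k * Y r k.

Lemma rgradE : rgrad (fobj eps tau) = fun Y : M => \matrix_(r, k) PE Y r k.
Proof.
apply/funext => Y; rewrite /rgrad egradE // /proj; apply/matrixP => r k.
rewrite !mxE /PE /CD /coldot; congr (_ - _ * _); apply: eq_bigr => s _.
by rewrite mxE.
Qed.

Definition dGG (Y V : M) r k := \sum_(j < n)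
  (pp eps tau (cc Y k j) * V r j + Y r j * (qq eps tau (cc Y k j) * dc Y V k j)).

Lemma isd_GGe (Y V : M) r k : is_derive Y V (fun Z => GGe Z r k) (dGG Y V r k).
Proof.
have h := @isd_sum R M n (fun j Z => pp eps tau (cc Z k j) * Z r j) Y V _
  (fun j => isd_mul (isd_comp (isd_coldot Y V k j) (isd_pp tau eps0 _)) (isd_coord Y V r j)).
by eapply is_derive_eq; first exact: h.
Qed.

Definition dCD (Y V : M) k := \sum_(s < 2) (Y s k * dGG Y V s k + GGe Y s k * V s k).

Lemma isd_CD (Y V : M) k : is_derive Y V (fun Z => CD Z k) (dCD Y V k).
Proof.
have h := @isd_sum R M 2 (fun s Z => Z s k * GGe Z s k) Y V _
  (fun s => isd_mul (isd_coord Y V s k) (isd_GGe Y V s k)).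
by eapply is_derive_eq; first exact: h.
Qed.

Definition dPE (Y V : M) r k := dGG Y V r k - (CD Y k * V r k + Y r k * dCD Y V k).

Lemma isd_PE (Y V : M) r k : is_derive Y V (fun Z => PE Z r k) (dPE Y V r k).
Proof.
have h := isd_sub (isd_GGe Y V r k) (isd_mul (isd_CD Y V k) (isd_coord Y V r k)).
by eapply is_derive_eq; first exact: h.
Qed.

Lemma DrgradE (X V : M) :
  'D_V (fun Y => rgrad (fobj eps tau) Y) X = \matrix_(r, k) dPE X V r k.
Proof.
rewrite rgradE.
have hd : forall r k, is_derive X V (fun Y : M => (\matrix_(r, k) PE Y r k) r k) (dPE X V r k).
  move=> r k; rewrite (_ : (fun Y : M => _) = fun Y => PE Y r k).
    exact: isd_PE.
  by apply/funext => Y; rewrite mxE.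
have der : derivable (fun Y : M => \matrix_(r, k) PE Y r k) X V.
  by apply/derivable_mxP => i j; have [] := hd i j.
rewrite (derive_mx der); apply/matrixP => r k; rewrite !mxE.
by have [_ ->] := hd r k.
Qed.

Lemma rhessE (X V : M) :
  rhess (fobj eps tau) X V = Defs.proj X (\matrix_(r, k) dPE X V r k).
Proof. by rewrite /rhess DrgradE. Qed.

End Deriv2.


Lemma sum2 (R : realType) (F : 'I_2 -> R) : \sum_(s < 2) F s = F 0 + F 1.
Proof. by rewrite big_ord_recl big_ord1; congr (F _ + F _); apply/val_inj. Qed.

Lemma proj2_0 (R : realType) (a z0 z1 : R) :
  z0 - (cos a * z0 + sin a * z1) * cos a = (- sin a * z0 + cos a * z1) * - sin a.
Proof.
apply/eqP; rewrite -subr_eq0.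
have -> : z0 - (cos a * z0 + sin a * z1) * cos a - (- sin a * z0 + cos a * z1) * - sin a
  = z0 * (1 - (cos a ^+ 2 + sin a ^+ 2)) by ring.
by rewrite cos2Dsin2 subrr mulr0.
Qed.

Lemma proj2_1 (R : realType) (a z0 z1 : R) :
  z1 - (cos a * z0 + sin a * z1) * sin a = (- sin a * z0 + cos a * z1) * cos a.
Proof.
apply/eqP; rewrite -subr_eq0.
have -> : z1 - (cos a * z0 + sin a * z1) * sin a - (- sin a * z0 + cos a * z1) * cos a
  = z1 * (1 - (cos a ^+ 2 + sin a ^+ 2)) by ring.
by rewrite cos2Dsin2 subrr mulr0.
Qed.

Arguments cc {R n}.
Arguments dc {R n}.
Arguments GGe {R n}.
Arguments dGG {R n}.
Arguments CD {R n}.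
Arguments dPE {R n}.
Arguments pp {R}.
Arguments qq {R}.

Section Ngon.
Variable R : realType.
Variable n : nat.
Notation M := 'M[R]_(2, n).
Notation X := (ngon R n).
Notation th := (@ang R n).

Definition Tf : M := \matrix_(r, j) (if r == 0 :> nat then - sin (th j) else cos (th j)).

Lemma X0 j : X 0 j = cos (th j). Proof. by rewrite mxE. Qed.
Lemma X1 j : X 1 j = sin (th j). Proof. by rewrite mxE. Qed.
Lemma T0 j : Tf 0 j = - sin (th j). Proof. by rewrite mxE. Qed.
Lemma T1 j : Tf 1 j = cos (th j). Proof. by rewrite mxE. Qed.

Lemma projX (Z : M) : Defs.proj X Z =
  \matrix_(r, k) ((\sum_(s < 2) Tf s k * Z s k) * Tf r k).
Proof.
apply/matrixP => r k; rewrite !mxE /coldot !sum2 !X0 !X1 T0 T1.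
case: r => -[|[|//]] rlt /=.
  by rewrite (_ : Ordinal rlt = 0); [exact: proj2_0|apply/val_inj].
by rewrite (_ : Ordinal rlt = 1); [exact: proj2_1|apply/val_inj].
Qed.

Variables eps tau : R.
Hypothesis eps0 : 0 < eps.

Definition Vm (a : 'I_n -> R) : M := \matrix_(r, j) (a j * Tf r j).
Definition Wf (x : R) := qq eps tau (cos x) * sin x ^+ 2 - pp eps tau (cos x) * cos x.

Lemma Vm_e a s j : Vm a s j = a j * Tf s j. Proof. by rewrite mxE. Qed.

Lemma cc_X k j : cc X k j = cos (th j - th k).
Proof. by rewrite /cc /coldot sum2 !X0 !X1 cosB; ring. Qed.

Lemma dc_X a k j : dc X (Vm a) k j = (a k - a j) * sin (th j - th k).
Proof. by rewrite /dc /coldot !sum2 !Vm_e !X0 !X1 !T0 !T1 sinB; ring. Qed.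

Lemma TdGG a k : \sum_(s < 2) Tf s k * dGG eps tau X (Vm a) s k =
  \sum_(j < n) (pp eps tau (cos (th j - th k)) * a j * cos (th j - th k)
     + qq eps tau (cos (th j - th k)) * ((a k - a j) * sin (th j - th k)) * sin (th j - th k)).
Proof.
rewrite /dGG; under eq_bigr do rewrite mulr_sumr.
rewrite exchange_big /=; apply: eq_bigr => j _.
by rewrite sum2 cc_X dc_X !Vm_e !X0 !X1 !T0 !T1 cosB sinB; ring.
Qed.

Lemma CD_X k : CD eps tau X k = \sum_(j < n) pp eps tau (cos (th j - th k)) * cos (th j - th k).
Proof.
rewrite /CD sum2 /GGe !mulr_sumr -big_split /=; apply: eq_bigr => j _.
by rewrite cc_X !X0 !X1 cosB; ring.
Qed.

Lemma TdPE a k : \sum_(s < 2) Tf s k * dPE eps tau X (Vm a) s k =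
  \sum_(j < n) Wf (th j - th k) * (a k - a j).
Proof.
have e : \sum_(s < 2) Tf s k * dPE eps tau X (Vm a) s k =
    (\sum_(s < 2) Tf s k * dGG eps tau X (Vm a) s k) - CD eps tau X k * a k.
  rewrite /dPE !sum2 !Vm_e !X0 !X1 !T0 !T1.
  rewrite -[in RHS](mulr1 (a k)) -(cos2Dsin2 (th k)); ring.
rewrite e TdGG CD_X mulr_suml -sumrB; apply: eq_bigr => j _.
by rewrite /Wf; ring.
Qed.

Lemma hessV a : rhess (fobj eps tau) X (Vm a) =
  \matrix_(r, k) ((\sum_(j < n) Wf (th j - th k) * (a k - a j)) * Tf r k).
Proof.
rewrite rhessE // projX; apply/matrixP => r k; rewrite [LHS]mxE [RHS]mxE.
by under eq_bigr do rewrite [X in _ * X]mxE; rewrite TdPE.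
Qed.

Lemma gradX : rgrad (fobj eps tau) X =
  \matrix_(r, k) ((\sum_(j < n) pp eps tau (cos (th j - th k)) * sin (th j - th k)) * Tf r k).
Proof.
rewrite /rgrad egradE // projX; apply/matrixP => r k; rewrite [LHS]mxE [RHS]mxE.
congr (_ * _); under eq_bigr do rewrite [X in _ * X]mxE.
rewrite sum2 /GGe !mulr_sumr -big_split /=; apply: eq_bigr => j _.
by rewrite cc_X !X0 !X1 !T0 !T1 sinB; ring.
Qed.

End Ngon.

Arguments pp {R}.
Arguments qq {R}.

Section Sums.
Variable R : realType.
Variable n : nat.
Hypothesis n0 : (0 < n)%N.
Variables eps tau : R.
Notation th := (@ang R n).
Notation W := (@Wf R eps tau).

Lemma per_cosf (f : R -> R) : periodic (fun x => f (cos x)) (pi *+ 2).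
Proof. by move=> x /=; rewrite cosD2pi. Qed.

Lemma per_W : periodic W (pi *+ 2).
Proof. by move=> x; rewrite /Wf cosD2pi sinD2pi. Qed.

Lemma W_even x : W (- x) = W x.
Proof. by rewrite /Wf cosN sinN sqrrN. Qed.

Lemma grad_sum0 k : (k <= n)%N ->
  \sum_(j < n) pp eps tau (cos (th j - th k)) * sin (th j - th k) = 0.
Proof.
move=> kn.
have pg : periodic (fun x => pp eps tau (cos x) * sin x) (pi *+ 2).
  by move=> x /=; rewrite cosD2pi sinD2pi.
rewrite (@sum_shiftB R n n0 _ pg k kn).
have := @sum_refl R n n0 _ pg.
under eq_bigr do rewrite cosN sinN mulrN.
rewrite sumrN => h; lra.
Qed.

Definition ca (m : nat) (j : nat) : R := cos (m%:R * th j) + sin (m%:R * th j).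
Definition lam (m : nat) : R := \sum_(l < n) W (th l) * (1 - cos (m%:R * th l)).

Lemma eigen_sum m k : (k <= n)%N ->
  \sum_(j < n) W (th j - th k) * (ca m k - ca m j) = lam m * ca m k.
Proof.
move=> kn.
have e1 : \sum_(j < n) W (th j - th k) = \sum_(l < n) W (th l).
  exact: (@sum_shiftB R n n0 _ per_W k kn).
set c := m%:R * th k.
pose g x := W x * (cos (m%:R * x + c) + sin (m%:R * x + c)).
have pg : periodic g (pi *+ 2).
  by move=> x; rewrite /g per_W (@per_cos R m c) (@per_sin R m c).
have e2 : \sum_(j < n) W (th j - th k) * ca m j = \sum_(l < n) g (th l).
  rewrite -(@sum_shiftB R n n0 _ pg k kn); apply: eq_bigr => j _.
  by rewrite /g /ca /c mulrBr subrK.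
have ps : periodic (fun x => W x * sin (m%:R * x + 0)) (pi *+ 2).
  by move=> x; rewrite per_W (@per_sin R m 0).
have e3 : \sum_(l < n) W (th l) * sin (m%:R * th l) = 0.
  have := @sum_refl R n n0 _ ps.
  under eq_bigr do rewrite W_even addr0 mulrN sinN mulrN.
  under [in X in _ = X -> _]eq_bigr do rewrite addr0.
  rewrite sumrN => h; lra.
have e4 : \sum_(l < n) g (th l) =
    (cos c + sin c) * \sum_(l < n) W (th l) * cos (m%:R * th l)
  + (cos c - sin c) * \sum_(l < n) W (th l) * sin (m%:R * th l).
  rewrite !mulr_sumr -big_split; apply: eq_bigr => l _.
  by rewrite /g cosD sinD; simpl; ring.
rewrite e3 mulr0 addr0 in e4.
have -> : \sum_(j < n) W (th j - th k) * (ca m k - ca m j)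
   = ca m k * \sum_(j < n) W (th j - th k) - \sum_(j < n) W (th j - th k) * ca m j.
  by rewrite mulr_sumr -sumrB; apply: eq_bigr => j _; ring.
rewrite e1 e2 e4 /lam /ca -/c.
have -> : \sum_(l < n) W (th l) * (1 - cos (m%:R * th l))
    = \sum_(l < n) W (th l) - \sum_(l < n) W (th l) * cos (m%:R * th l).
  by rewrite -sumrB; apply: eq_bigr => l _; ring.
ring.
Qed.

End Sums.


Section Basis.
Variable R : realType.
Variable n : nat.
Hypothesis n0 : (0 < n)%N.
Notation th := (@ang R n).
Notation X := (ngon R n).
Notation ca := (@ca R n).
Notation Vm := (@Vm R n).

Definition sN : R := Num.sqrt n%:R.
Lemma sN_gt0 : 0 < sN. Proof. by rewrite /sN sqrtr_gt0 ltr0n. Qed.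
Lemma sN2 : sN ^+ 2 = n%:R. Proof. by rewrite /sN sqr_sqrtr // ler0n. Qed.

Definition Bm (m : 'I_n) : 'M[R]_(2, n) := Vm (fun j : 'I_n => ca m j / sN).

Lemma tangentB m : tangent X (Bm m).
Proof.
move=> j; rewrite /coldot sum2 !Vm_e !X0 !X1 !T0 !T1; ring.
Qed.

Lemma ca_prod (m m' : nat) j :
  ca m j * ca m' j = cos (m%:R * th j - m'%:R * th j) + sin ((m + m')%:R * th j).
Proof. by rewrite /ca cosB natrD [(_ + _) * th j]mulrDl sinD; ring. Qed.

Lemma sum_cos_diff (m m' : nat) : (m < n)%N -> (m' < n)%N ->
  \sum_(j < n) cos (m%:R * th j - m'%:R * th j) = if m == m' then n%:R else 0.
Proof.
move=> mn m'n; case: (ltngtP m m') => h.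
- rewrite ?ltn_eqF //.
  under eq_bigr do rewrite -cosN opprB -mulrBl -natrB ?(ltnW h) //.
  apply: sum_cos0 => //; first by rewrite subn_gt0.
  exact: leq_ltn_trans (leq_subr _ _) m'n.
- rewrite ?gtn_eqF //.
  under eq_bigr do rewrite -mulrBl -natrB ?(ltnW h) //.
  apply: sum_cos0 => //; first by rewrite subn_gt0.
  exact: leq_ltn_trans (leq_subr _ _) mn.
- rewrite -?h ?eqxx; under eq_bigr do rewrite subrr cos0.
  by rewrite sumr_const card_ord.
Qed.

Lemma frobB m m' : frob (Bm m) (Bm m') = (m == m')%:R.
Proof.
rewrite /frob sum2 -big_split /=.
have -> : \sum_(i < n) (Bm m 0 i * Bm m' 0 i + Bm m 1 i * Bm m' 1 i)
   = \sum_(i < n) (ca m i * ca m' i) / n%:R.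
  apply: eq_bigr => i _; rewrite !Vm_e !T0 !T1.
  have h := cos2Dsin2 (th i); have h2 := sN2; have h3 := sN_gt0.
  have hn : (n%:R : R) != 0 by rewrite pnatr_eq0 -lt0n.
  rewrite -h2; have hs : sN != 0 by rewrite gt_eqF.
  rewrite -[X in _ = X](mulr1) -h. field. done.
rewrite -mulr_suml; under eq_bigr do rewrite ca_prod.
rewrite big_split /= sum_sin0 // addr0 sum_cos_diff //.
have hn : (n%:R : R) != 0 by rewrite pnatr_eq0 -lt0n.
have [->|ne] := eqVneq m m'; first by rewrite !eqxx divff.
have ne' : (m : nat) != m' by [].
by rewrite (negbTE ne') ?(negbTE ne) mul0r.
Qed.

Lemma hessB eps tau (eps0 : 0 < eps) m :
  rhess (fobj eps tau) X (Bm m) = @lam R n eps tau m *: Bm m.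
Proof.
rewrite /Bm hessV //; apply/matrixP => r k; rewrite !mxE.
have e := @eigen_sum R n n0 eps tau m k (ltnW (ltn_ord k)).
have -> : \sum_(j < n) Wf R eps tau (th j - th k) * (ca m k / sN - ca m j / sN)
   = (\sum_(j < n) Wf R eps tau (th j - th k) * (ca m k - ca m j)) / sN.
  by rewrite mulr_suml; apply: eq_bigr => j _; ring.
rewrite e; ring.
Qed.

End Basis.


Lemma exp_bound (R : realType) (K : R) : 0 < K -> expR (- K) <= 4 / K ^+ 2.
Proof.
move=> K0.
have h1 : 1 + K / 2 <= expR (K / 2) := expR_ge1Dx _.
have h2 : expR K = expR (K / 2) * expR (K / 2) by rewrite -expRD; congr expR; field.
have h3 : expR (- K) * expR K = 1 by rewrite mulrC expRxMexpNx_1.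
have a0 := expR_gt0 (- K).
have e0 := expR_gt0 (K / 2).
rewrite ler_pdivlMr ?exprn_gt0 //.
set a := expR (- K) in h3 a0 *; set b := expR K in h2 h3 *; set c := expR (K / 2) in h1 h2 e0.
have hb : K ^+ 2 <= 4 * b.
  rewrite h2; have hc : 0 <= 1 + K / 2 by lra.
  have := ler_pM hc hc h1 h1; nra.
nra.
Qed.

Section Est.
Variable R : realType.
Variables eps tau : R.
Hypothesis eps0 : 0 < eps.

Lemma pp_ge0 t : 0 <= pp eps tau t.
Proof. by rewrite /pp divr_ge0 // ?expR_ge0 // ltW // onee_gt0. Qed.

Lemma pp_le1 t : pp eps tau t <= 1.
Proof. by rewrite /pp ler_pdivrMr ?onee_gt0 // mul1r lerDr ler01. Qed.

Lemma qq_ge0 t : 0 <= qq eps tau t.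
Proof. by rewrite /qq !divr_ge0 ?expR_ge0 ?exprn_ge0 ?ltW ?onee_gt0. Qed.

Lemma uu_le t d : t - tau <= - d -> uu eps tau t <= - (d / eps).
Proof.
move=> h; rewrite /uu -mulNr; apply: ler_wpM2r => //.
by rewrite invr_ge0 ltW.
Qed.

Lemma uu_ge t d : d <= t - tau -> d / eps <= uu eps tau t.
Proof. by move=> h; rewrite /uu; apply: ler_wpM2r => //; rewrite invr_ge0 ltW. Qed.

Lemma pp_neg t d : t - tau <= - d -> pp eps tau t <= expR (- (d / eps)).
Proof.
move=> h; rewrite /pp.
have e0 := expR_gt0 (uu eps tau t).
apply: le_trans (_ : expR (uu eps tau t) <= _).
  rewrite ler_pdivrMr ?onee_gt0 //; nra.
by rewrite ler_expR uu_le.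
Qed.

Lemma pp_half t : tau < t -> 2^-1 <= pp eps tau t.
Proof.
move=> h; rewrite /pp.
have u0 : 0 < uu eps tau t by rewrite /uu divr_gt0 // subr_gt0.
have e1 : 1 < expR (uu eps tau t) by rewrite expR_gt1.
rewrite ler_pdivlMr ?onee_gt0 //.
lra.
Qed.

Lemma qq_bound t d : 0 < d -> d <= `|t - tau| ->
  qq eps tau t <= expR (- (d / eps)) / eps.
Proof.
move=> d0 h; rewrite /qq ler_pM2r ?invr_gt0 //.
set u := uu eps tau t.
have e0 := expR_gt0 u.
have q0 : 0 < (1 + expR u) ^+ 2 by rewrite exprn_gt0 // onee_gt0.
rewrite ler_pdivrMr //.
have [tp|tn] := leP 0 (t - tau).
- rewrite ger0_norm // in h.
  have hu : d / eps <= u := uu_ge _ _ h.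
  have hb : expR (- u) <= expR (- (d / eps)) by rewrite ler_expR lerN2.
  have ab : expR (- u) * expR u = 1 by rewrite mulrC expRxMexpNx_1.
  have b0 := expR_gt0 (- u).
  apply: le_trans (_ : expR (- u) * (1 + expR u) ^+ 2 <= _); last first.
    by rewrite ler_pM2r.
  set a := expR u in e0 ab q0 *; set b := expR (- u) in hb ab b0 *.
  nra.
- rewrite ltr0_norm // in h.
  have hu : u <= - (d / eps) by apply: uu_le; lra.
  have hb : expR u <= expR (- (d / eps)) by rewrite ler_expR.
  set a := expR u in e0 q0 hb *.
  have : a <= a * (1 + a) ^+ 2 by nra.
  set c := expR (- (d / eps)) in hb *; nra.
Qed.

Lemma W_le x d : 0 < d -> d <= `|cos x - tau| -> 0 <= tau ->
  Wf R eps tau x <= expR (- (d / eps)) / eps + expR (- (d / eps)).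
Proof.
move=> d0 h t0; rewrite /Wf.
have hq := qq_bound _ _ d0 h.
have q0 := qq_ge0 (cos x).
have s1 : sin x ^+ 2 <= 1 by have := cos2Dsin2 x; have := sqr_ge0 (cos x); lra.
have s0 := sqr_ge0 (sin x).
have p0 := pp_ge0 (cos x).
have hqs : qq eps tau (cos x) * sin x ^+ 2 <= expR (- (d / eps)) / eps.
  apply: le_trans hq; rewrite -[leRHS]mulr1; exact: ler_wpM2l.
have E0 := expR_gt0 (- (d / eps)).
have [c0|c0] := leP 0 (cos x).
- have : 0 <= pp eps tau (cos x) * cos x by exact: mulr_ge0.
  lra.
- have hn : cos x - tau <= - d.
    by rewrite ltr0_norm ?subr_lt0 in h; [lra | lra].
  have hp := pp_neg _ _ hn.
  have c1 := cos_geN1 x.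
  have : - (pp eps tau (cos x) * cos x) <= pp eps tau (cos x).
    rewrite -mulrN -[leRHS]mulr1; apply: ler_wpM2l => //; lra.
  lra.
Qed.

Lemma W1_le x d : 0 < d -> d <= `|cos x - tau| -> tau < cos x -> 0 <= tau ->
  Wf R eps tau x <= expR (- (d / eps)) / eps - cos x / 2.
Proof.
move=> d0 h tc t0; rewrite /Wf.
have hq := qq_bound _ _ d0 h.
have q0 := qq_ge0 (cos x).
have s1 : sin x ^+ 2 <= 1 by have := cos2Dsin2 x; have := sqr_ge0 (cos x); lra.
have hqs : qq eps tau (cos x) * sin x ^+ 2 <= expR (- (d / eps)) / eps.
  apply: le_trans hq; rewrite -[leRHS]mulr1; exact: ler_wpM2l.
have hp := pp_half _ tc.
have c0 : 0 < cos x by lra.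
have : 2^-1 * cos x <= pp eps tau (cos x) * cos x by rewrite ler_pM2r.
lra.
Qed.

End Est.


Lemma fin_min (R : realType) (I : finType) (P : pred I) (f : I -> R) :
  (forall i, P i -> 0 < f i) -> exists2 g : R, 0 < g & forall i, P i -> g <= f i.
Proof.
move=> h; exists (\big[Num.min/1]_(i | P i) f i).
  elim/big_ind: _ => //; first by move=> x y x0 y0; rewrite lt_min x0 y0.
move=> i Pi; by rewrite (bigD1 i) //= ge_min lexx.
Qed.

Lemma c1_gt (R : realType) (n : nat) : (5 <= n)%N ->
  cos (2 * pi / 5) <= cos (ang R n 1) :> R.
Proof.
move=> n5.
have hn : (5 : R) <= n%:R by rewrite ler_nat.
have p0 := pi_gt0 R.
have x0 : 0 <= ang R n 1 by rewrite /ang mulr1n mulr1 divr_ge0 // ?mulr_ge0 // ?ler0n ?ltW.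
have x1 : ang R n 1 <= 2 * pi / 5 :> R.
  rewrite /ang mulr1n mulr1 ler_pdivrMr ?(lt_le_trans _ hn) //.
  rewrite mulrAC ler_pdivlMr //; nra.
have y1 : 2 * pi / 5 <= pi :> R by rewrite ler_pdivrMr //; nra.
rewrite leNgt ltr_cos ?in_itv /= ?x0 ?(le_trans x1 y1) //; last first.
  by apply/andP; split => //; rewrite divr_ge0 // mulr_ge0 // ltW.
by rewrite -leNgt.
Qed.

Theorem mainTheorem12 (R : realType) (n : nat) (tau : R) :
  (5 <= n)%N ->
  0 <= tau -> tau < cos (2 * pi / 5) ->
  (forall i : 'I_n, tau != cos (2 * pi * i%:R / n%:R)) ->
  exists2 eps0 : R, 0 < eps0 &
    forall eps : R, 0 < eps -> eps <= eps0 ->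
      rgrad (fobj eps tau) (ngon R n) = 0 /\
      exists (B : 'I_n -> 'M[R]_(2, n)) (lam : 'I_n -> R),
        [/\ (forall k, tangent (ngon R n) (B k)),
            (forall k l, frob (B k) (B l) = (k == l)%:R),
            (forall k, rhess (fobj eps tau) (ngon R n) (B k) = lam k *: B k)
          & exists k0, lam k0 = 0 /\ (forall k, k != k0 -> lam k < 0)].
Proof.
move=> n5 t0 t5 tn.
have n0 : (0 < n)%N by apply: leq_trans n5.
have n1 : (1 < n)%N by apply: leq_trans n5.
have [d d0 hd] := @fin_min R 'I_n predT (fun i => `|cos (ang R n i) - tau|)
  (fun i _ => ltac:(by rewrite normr_gt0 subr_eq0 eq_sym; exact: tn i)).
have gpos : forall m : 'I_n, (m : nat) != 0%N -> 0 < 1 - cos ((m : nat)%:R * ang R n 1).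
  move=> m m0; rewrite subr_gt0; apply: cos_lt1.
  have -> : (m : nat)%:R * ang R n 1 = (pi *+ 2) * ((m : nat)%:R / n%:R).
    rewrite /ang; have hn : (n%:R : R) != 0 by rewrite pnatr_eq0 -lt0n.
    by rewrite -mulr_natl; field.
  have hn : (0 : R) < n%:R by rewrite ltr0n.
  have q0 : 0 < ((m : nat)%:R : R) / n%:R by rewrite divr_gt0 // ltr0n lt0n.
  have q1 : ((m : nat)%:R : R) / n%:R < 1 by rewrite ltr_pdivrMr // mul1r ltr_nat.
  have p0 : 0 < pi *+ 2 :> R by rewrite mulrn_wgt0 // pi_gt0.
  set P := pi *+ 2 in p0 *; set q := _ / _ in q0 q1 *.
  apply/andP; split; nra.
have [g g0 hg] := @fin_min R 'I_n (fun m => (m : nat) != 0%N)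
    (fun m => 1 - cos ((m : nat)%:R * ang R n 1)) gpos.
set c1 := cos (ang R n 1).
have hc1 : tau < c1 by apply: (lt_le_trans t5); exact: c1_gt.
have c10 : 0 < c1 by lra.
set N : R := n%:R.
have N0 : 0 < N by rewrite ltr0n.
set b := c1 * g * d ^+ 2 / (64 * N).
have b0 : 0 < b by rewrite /b !divr_gt0 ?mulr_gt0 ?exprn_gt0.
exists (Num.min 1 b); first by rewrite lt_min ltr01 b0.
move=> eps ep ee.
move: ee; rewrite le_min => /andP[eps1 epsb].
split.
  rewrite gradX //; apply/matrixP => r k; rewrite !mxE.
  by rewrite grad_sum0 ?mul0r // ltnW.
exists (Bm R n), (fun k => lam R n eps tau k); split.
- exact: tangentB.
- exact: frobB.
- by move=> k; exact: hessB.
exists (Ordinal n0); split.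
  rewrite /lam big1 // => l _; by rewrite /= mulr0n mul0r cos0 subrr mulr0.
move=> k kne /=.
have k0 : (k : nat) != 0%N.
  by apply: contra kne => /eqP e; apply/eqP/val_inj.
set A := expR (- (d / eps)).
set E := A / eps + A.
have A0 : 0 < A by rewrite expR_gt0.
have E0 : 0 <= E by rewrite /E addr_ge0 // ltW // divr_gt0.
have step : forall l : 'I_n, Wf R eps tau (ang R n l) * (1 - cos ((k : nat)%:R * ang R n l))
    <= 2 * E - (if (l : nat) == 1%N then c1 * g / 2 else 0).
  move=> l.
  have D0 : 0 <= 1 - cos ((k : nat)%:R * ang R n l) by have := cos_le1 ((k : nat)%:R * ang R n l); lra.
  have D2 : 1 - cos ((k : nat)%:R * ang R n l) <= 2 by have := cos_geN1 ((k : nat)%:R * ang R n l); lra.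
  have hdl := hd l isT.
  case: eqP => [l1|ln1].
    rewrite l1 in hdl D0 D2 *.
    have hw := @W1_le R eps tau ep (ang R n 1) d d0 hdl hc1 t0.
    have hgk := hg k k0.
    rewrite -/c1 in hw.
    set D := 1 - _ in D0 D2 hgk *.
    set W := Wf R eps tau _ in hw *.
    have hwD : W * D <= (A / eps - c1 / 2) * D by exact: ler_wpM2r.
    have Ae : 0 <= A / eps by rewrite divr_ge0 // ltW.
    have f1 : A / eps * D <= A / eps * 2 by exact: ler_wpM2l.
    have f2 : c1 * g <= c1 * D by rewrite ler_wpM2l // ltW.
    have eE : E = A / eps + A by [].
    have : (A / eps - c1 / 2) * D = A / eps * D - (c1 * D) / 2 by ring.
    lra.
  have hw := @W_le R eps tau ep (ang R n l) d d0 hdl t0.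
  set D := 1 - _ in D0 D2 *.
  set W := Wf R eps tau _ in hw *.
  have hwD : W * D <= E * D by exact: ler_wpM2r.
  have f1 : E * D <= E * 2 by exact: ler_wpM2l.
  lra.
have hsum : \sum_(l < n) Wf R eps tau (ang R n l) * (1 - cos ((k : nat)%:R * ang R n l))
    <= \sum_(l < n) (2 * E - (if (l : nat) == 1%N then c1 * g / 2 else 0)).
  by apply: ler_sum => l _; exact: step.
rewrite sumrB sumr_const card_ord in hsum.
have e1 : \sum_(l < n) (if (l : nat) == 1%N then c1 * g / 2 else 0) = c1 * g / 2.
  rewrite (bigD1 (Ordinal n1)) //= big1 ?addr0 // => l ne.
  case: eqP => // l1; case/eqP: ne; exact: val_inj.
rewrite e1 in hsum.
apply: (le_lt_trans hsum).
have dk : 0 < d / eps by rewrite divr_gt0.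
have ha := @exp_bound R _ dk; rewrite -/A in ha.
set Z := d ^+ 2.
have Z0 : 0 < Z by rewrite exprn_gt0.
have hk : A * (d / eps) ^+ 2 <= 4 by rewrite -ler_pdivlMr ?exprn_gt0.
have hz : (d / eps) ^+ 2 * eps ^+ 2 = Z by rewrite /Z; field; rewrite gt_eqF.
have ha' : A * Z <= 4 * eps ^+ 2.
  rewrite -hz mulrA; apply: ler_wpM2r => //; exact: sqr_ge0.
have h1 : A / eps * Z <= 4 * eps.
  rewrite mulrAC ler_pdivrMr //; rewrite expr2 in ha'; nra.
have h2 : A * Z <= 4 * eps by rewrite expr2 in ha'; nra.
have he0 : eps * (64 * N) <= c1 * g * Z by rewrite -ler_pdivlMr ?mulr_gt0.
have hE : E * Z <= 8 * eps by rewrite /E mulrDl; lra.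
have hNE : N * (E * Z) <= N * (8 * eps) by rewrite ler_wpM2l // ltW.
have cg : 0 < c1 * g * Z by rewrite !mulr_gt0.
rewrite -[_ *+ n]mulr_natl -/N.
have key : (N * (2 * E) - c1 * g / 2) * Z < 0.
  have -> : (N * (2 * E) - c1 * g / 2) * Z = 2 * (N * (E * Z)) - (c1 * g * Z) / 2 by ring.
  lra.
by rewrite pmulr_llt0 in key.
Qed.
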